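(* Under the hypotheses of Lemma 2.2, define $T=P_1\phi(P_1)P_2+P_2\phi(P_2)P_1$ and the additive map $\varphi:\mathcal{U}\to\mathcal{U}$ by $\varphi(U)=\phi(U)-\phi(I)U+[T,U]$. Then (1) $\varphi(P_1)=\varphi(P_2)=0$; and (2) $\varphi$ satisfies $\varphi(U)\circ V+U\circ\varphi(V)=0$ for all $U,V\in\mathcal{U}$ with $UV=VU=0$.
   Context: $\mathcal{U}=\begin{pmatrix}\mathcal{A}&\mathcal{M}\\ \mathcal{N}&\mathcal{B}\end{pmatrix}$ is a generalized matrix ring: $\mathcal{A},\mathcal{B}$ unital 2-torsion free rings, $\mathcal{M}$ a unital $(\mathcal{A},\mathcal{B})$-bimodule faithful on both sides, $\mathcal{N}$ a unital $(\mathcal{B},\mathcal{A})$-bimodule, with bimodule pairings $MN\in\mathcal{A}$, $NM\in\mathcal{B}$ satisfying $(MN)M'=M(NM')$, $(NM)N'=N(MN')$; $\mathcal{U}$ consists of $2\times2$ matrices with usual matrix operations and identity $I$. The hypotheses of Lemma 2.2: $\phi:\mathcal{U}\to\mathcal{U}$ is additive and $\phi(U)\circ V+U\circ\phi(V)=0$ whenever $UV=VU=0$. $X\circ Y=XY+YX$, $[X,Y]=XY-YX$. $P_1=\mathrm{diag}(I_{\mathcal{A}},0)$, $P_2=\mathrm{diag}(0,I_{\mathcal{B}})$. *)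

(* Defs.v *)
From HB Require Import structures.
From mathcomp Require Import all_boot all_order all_algebra.
Set Implicit Arguments. Unset Strict Implicit. Unset Printing Implicit Defensive.
Import GRing.Theory.
Local Open Scope ring_scope.

(* Data of a generalized matrix ring  U = [A M; N B]. *)
Record GMR := {
  gA : pzRingType; gB : pzRingType; gM : zmodType; gN : zmodType;
  actAM : gA -> gM -> gM;
  actMB : gM -> gB -> gM;
  actBN : gB -> gN -> gN;
  actNA : gN -> gA -> gN;
  pMN : gM -> gN -> gA;
  pNM : gN -> gM -> gB;
  actAM_addl : forall a a' m, actAM (a + a') m = actAM a m + actAM a' m;
  actAM_addr : forall a m m', actAM a (m + m') = actAM a m + actAM a m';
  actAM_mul : forall a a' m, actAM (a * a') m = actAM a (actAM a' m);
  actAM_one : forall m, actAM 1 m = m;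
  actMB_addl : forall m m' b, actMB (m + m') b = actMB m b + actMB m' b;
  actMB_addr : forall m b b', actMB m (b + b') = actMB m b + actMB m b';
  actMB_mul : forall m b b', actMB m (b * b') = actMB (actMB m b) b';
  actMB_one : forall m, actMB m 1 = m;
  actAMB : forall a m b, actMB (actAM a m) b = actAM a (actMB m b);
  actBN_addl : forall b b' n, actBN (b + b') n = actBN b n + actBN b' n;
  actBN_addr : forall b n n', actBN b (n + n') = actBN b n + actBN b n';
  actBN_mul : forall b b' n, actBN (b * b') n = actBN b (actBN b' n);
  actBN_one : forall n, actBN 1 n = n;
  actNA_addl : forall n n' a, actNA (n + n') a = actNA n a + actNA n' a;
  actNA_addr : forall n a a', actNA n (a + a') = actNA n a + actNA n a';
  actNA_mul : forall n a a', actNA n (a * a') = actNA (actNA n a) a';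
  actNA_one : forall n, actNA n 1 = n;
  actBNA : forall b n a, actNA (actBN b n) a = actBN b (actNA n a);
  (* bimodule homomorphisms M (x)_B N -> A and N (x)_A M -> B *)
  pMN_addl : forall m m' n, pMN (m + m') n = pMN m n + pMN m' n;
  pMN_addr : forall m n n', pMN m (n + n') = pMN m n + pMN m n';
  pMN_bal : forall m b n, pMN (actMB m b) n = pMN m (actBN b n);
  pMN_actl : forall a m n, pMN (actAM a m) n = a * pMN m n;
  pMN_actr : forall m n a, pMN m (actNA n a) = pMN m n * a;
  pNM_addl : forall n n' m, pNM (n + n') m = pNM n m + pNM n' m;
  pNM_addr : forall n m m', pNM n (m + m') = pNM n m + pNM n m';
  pNM_bal : forall n a m, pNM (actNA n a) m = pNM n (actAM a m);
  pNM_actl : forall b n m, pNM (actBN b n) m = b * pNM n m;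
  pNM_actr : forall n m b, pNM n (actMB m b) = pNM n m * b;
  pMN_assoc : forall m n m', actAM (pMN m n) m' = actMB m (pNM n m');
  pNM_assoc : forall n m n', actBN (pNM n m) n' = actNA n (pMN m n');
}.

Definition gmr_hyp (G : GMR) : Prop :=
  (forall a : gA G, a + a = 0 -> a = 0) /\
  (forall b : gB G, b + b = 0 -> b = 0) /\
  (forall a : gA G, (forall m, actAM a m = 0) -> a = 0) /\
  (forall b : gB G, (forall m, actMB m b = 0) -> b = 0).

Record mat (G : GMR) := Mat { m11 : gA G; m12 : gM G; m21 : gN G; m22 : gB G }.

Section Ops.
Variable G : GMR.
Definition madd (X Y : mat G) : mat G :=
  Mat (m11 X + m11 Y) (m12 X + m12 Y) (m21 X + m21 Y) (m22 X + m22 Y).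
Definition mopp (X : mat G) : mat G :=
  Mat (- m11 X) (- m12 X) (- m21 X) (- m22 X).
Definition msub (X Y : mat G) : mat G := madd X (mopp Y).
Definition mzero : mat G := Mat 0 0 0 0.
Definition mone : mat G := Mat 1 0 0 1.
Definition mmul (X Y : mat G) : mat G :=
  Mat (m11 X * m11 Y + pMN (m12 X) (m21 Y))
      (actAM (m11 X) (m12 Y) + actMB (m12 X) (m22 Y))
      (actBN (m22 X) (m21 Y) + actNA (m21 X) (m11 Y))
      (pNM (m21 X) (m12 Y) + m22 X * m22 Y).
Definition mP1 : mat G := Mat 1 0 0 0.
Definition mP2 : mat G := Mat 0 0 0 1.
Definition jord (X Y : mat G) : mat G := madd (mmul X Y) (mmul Y X).
Definition comm (X Y : mat G) : mat G := msub (mmul X Y) (mmul Y X).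
End Ops.
Arguments mzero {G}. Arguments mone {G}. Arguments mP1 {G}. Arguments mP2 {G}.

Definition Tof (G : GMR) (phi : mat G -> mat G) : mat G :=
  madd (mmul (mmul mP1 (phi mP1)) mP2) (mmul (mmul mP2 (phi mP2)) mP1).
Definition varphi (G : GMR) (phi : mat G -> mat G) (U : mat G) : mat G :=
  madd (msub (phi U) (mmul (phi mone) U)) (comm (Tof phi) U).

(* Main.v *)
Require Import Defs.
From HB Require Import structures.
From mathcomp Require Import all_boot all_order all_algebra.
Set Implicit Arguments. Unset Strict Implicit. Unset Printing Implicit Defensive.
Import GRing.Theory.
Local Open Scope ring_scope.

Section Z.
Variables (U V : zmodType) (f : U -> V) (fD : forall x y, f (x + y) = f x + f y).
Lemma addf0 : f 0 = 0.
Proof. by apply/(addrI (f 0)); rewrite -fD !addr0. Qed.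
Lemma addfN x : f (- x) = - f x.
Proof. by apply/(addrI (f x)); rewrite -fD !subrr addf0. Qed.
End Z.

Definition mat_enc (G : GMR) (X : mat G) := (m11 X, m12 X, m21 X, m22 X).
Definition mat_dec (G : GMR) (p : gA G * gM G * gN G * gB G) :=
  let: (a, m, n, b) := p in Mat a m n b.
Lemma mat_encK (G : GMR) : cancel (@mat_enc G) (@mat_dec G).
Proof. by case. Qed.
HB.instance Definition _ (G : GMR) := Choice.copy (mat G) (can_type (@mat_encK G)).

Lemma mat_ext (G : GMR) (X Y : mat G) : m11 X = m11 Y -> m12 X = m12 Y ->
  m21 X = m21 Y -> m22 X = m22 Y -> X = Y.
Proof. by case: X; case: Y => /= ? ? ? ? ? ? ? ? -> -> -> ->. Qed.

Lemma maddA (G : GMR) : associative (@madd G).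
Proof. by move=> x y z; apply: mat_ext; rewrite /= addrA. Qed.
Lemma maddC (G : GMR) : commutative (@madd G).
Proof. by move=> x y; apply: mat_ext; rewrite /= addrC. Qed.
Lemma madd0 (G : GMR) : left_id (@mzero G) (@madd G).
Proof. by move=> x; apply: mat_ext; rewrite /= add0r. Qed.
Lemma maddN (G : GMR) : left_inverse (@mzero G) (@mopp G) (@madd G).
Proof. by move=> x; apply: mat_ext; rewrite /= addNr. Qed.
HB.instance Definition _ (G : GMR) := GRing.isZmodule.Build (mat G)
  (@maddA G) (@maddC G) (@madd0 G) (@maddN G).

Section Simp.
Variable G : GMR.
Implicit Types (a : gA G) (b : gB G) (m : gM G) (n : gN G).
Lemma actAM0l m : actAM 0 m = 0. Proof. exact: (@addf0 _ _ (fun x => actAM x m) (fun x y => actAM_addl x y m)). Qed.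
Lemma actAM0r a : actAM a 0 = 0. Proof. exact: (addf0 (actAM_addr a)). Qed.
Lemma actMB0l b : actMB 0 b = 0. Proof. exact: (@addf0 _ _ (fun x => actMB x b) (fun x y => actMB_addl x y b)). Qed.
Lemma actMB0r m : actMB m 0 = 0. Proof. exact: (addf0 (actMB_addr m)). Qed.
Lemma actBN0l n : actBN 0 n = 0. Proof. exact: (@addf0 _ _ (fun x => actBN x n) (fun x y => actBN_addl x y n)). Qed.
Lemma actBN0r b : actBN b 0 = 0. Proof. exact: (addf0 (actBN_addr b)). Qed.
Lemma actNA0l a : actNA 0 a = 0. Proof. exact: (@addf0 _ _ (fun x => actNA x a) (fun x y => actNA_addl x y a)). Qed.
Lemma actNA0r n : actNA n 0 = 0. Proof. exact: (addf0 (actNA_addr n)). Qed.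
Lemma pMN0l n : pMN 0 n = 0. Proof. exact: (@addf0 _ _ (fun x => pMN x n) (fun x y => pMN_addl x y n)). Qed.
Lemma pMN0r m : pMN m 0 = 0. Proof. exact: (addf0 (pMN_addr m)). Qed.
Lemma pNM0l m : pNM 0 m = 0. Proof. exact: (@addf0 _ _ (fun x => pNM x m) (fun x y => pNM_addl x y m)). Qed.
Lemma pNM0r n : pNM n 0 = 0. Proof. exact: (addf0 (pNM_addr n)). Qed.
Lemma actAMNl a m : actAM (- a) m = - actAM a m. Proof. exact: (@addfN _ _ (fun x => actAM x m) (fun x y => actAM_addl x y m)). Qed.
Lemma actAMNr a m : actAM a (- m) = - actAM a m. Proof. exact: (addfN (actAM_addr a)). Qed.
Lemma actMBNl m b : actMB (- m) b = - actMB m b. Proof. exact: (@addfN _ _ (fun x => actMB x b) (fun x y => actMB_addl x y b)). Qed.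
Lemma actMBNr m b : actMB m (- b) = - actMB m b. Proof. exact: (addfN (actMB_addr m)). Qed.
Lemma actBNNl b n : actBN (- b) n = - actBN b n. Proof. exact: (@addfN _ _ (fun x => actBN x n) (fun x y => actBN_addl x y n)). Qed.
Lemma actBNNr b n : actBN b (- n) = - actBN b n. Proof. exact: (addfN (actBN_addr b)). Qed.
Lemma actNANl n a : actNA (- n) a = - actNA n a. Proof. exact: (@addfN _ _ (fun x => actNA x a) (fun x y => actNA_addl x y a)). Qed.
Lemma actNANr n a : actNA n (- a) = - actNA n a. Proof. exact: (addfN (actNA_addr n)). Qed.
Lemma pMNNl m n : pMN (- m) n = - pMN m n. Proof. exact: (@addfN _ _ (fun x => pMN x n) (fun x y => pMN_addl x y n)). Qed.
Lemma pMNNr m n : pMN m (- n) = - pMN m n. Proof. exact: (addfN (pMN_addr m)). Qed.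
Lemma pNMNl n m : pNM (- n) m = - pNM n m. Proof. exact: (@addfN _ _ (fun x => pNM x m) (fun x y => pNM_addl x y m)). Qed.
Lemma pNMNr n m : pNM n (- m) = - pNM n m. Proof. exact: (addfN (pNM_addr n)). Qed.
End Simp.

Ltac simpl0 := rewrite ?actAM0l ?actAM0r ?actMB0l ?actMB0r ?actBN0l ?actBN0r ?actNA0l ?actNA0r ?pMN0l ?pMN0r ?pNM0l ?pNM0r ?mul0r ?mulr0 ?add0r ?addr0 ?oppr0 ?mul1r ?mulr1.
Ltac simplN := rewrite ?actAMNl ?actAMNr ?actMBNl ?actMBNr ?actBNNl ?actBNNr ?actNANl ?actNANr ?pMNNl ?pMNNr ?pNMNl ?pNMNr ?mulNr ?mulrN ?opprK ?opprD.
Ltac simplD := rewrite ?actAM_addl ?actAM_addr ?actMB_addl ?actMB_addr ?actBN_addl ?actBN_addr ?actNA_addl ?actNA_addr ?pMN_addl ?pMN_addr ?pNM_addl ?pNM_addr ?mulrDl ?mulrDr.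
Ltac simplA := rewrite ?actAM_one ?actMB_one ?actBN_one ?actNA_one ?actAM_mul ?actMB_mul ?actBN_mul ?actNA_mul ?actAMB ?actBNA ?pMN_bal ?pMN_actl ?pMN_actr ?pNM_bal ?pNM_actl ?pNM_actr ?pMN_assoc ?pNM_assoc ?mulrA.

Ltac front a := match goal with
 | |- _ = a + _ => idtac
 | |- _ = a => idtac
 | |- _ = _ => first [ rewrite [in RHS](addrCA _ a) | rewrite [in RHS](addrC _ a) ]; front a end.
Ltac acsolve := rewrite -?addrA; repeat (match goal with
  | |- ?a + _ = _ => front a; congr (_ + _) end); try reflexivity.

Ltac mcomp := apply: mat_ext; simpl; simpl0; simplN; simplD; simplA; simpl0; rewrite ?subrr ?addNr ?addrN ?opprK.

Lemma mmulA (G : GMR) : associative (@mmul G).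
Proof.
move=> x y z; apply: mat_ext; simpl; simplD; simplA; acsolve.
Qed.
Lemma mmul1 (G : GMR) : left_id (@mone G) (@mmul G).
Proof. by move=> x; apply: mat_ext; simpl; simpl0; simplA. Qed.
Lemma mmulr1 (G : GMR) : right_id (@mone G) (@mmul G).
Proof. by move=> x; apply: mat_ext; simpl; simpl0; simplA. Qed.
Lemma mmulDl (G : GMR) : left_distributive (@mmul G) (@madd G).
Proof. by move=> x y z; apply: mat_ext; simpl; simplD; acsolve. Qed.
Lemma mmulDr (G : GMR) : right_distributive (@mmul G) (@madd G).
Proof. by move=> x y z; apply: mat_ext; simpl; simplD; acsolve. Qed.
HB.instance Definition _ (G : GMR) := GRing.Zmodule_isPzRing.Build (mat G)
  (@mmulA G) (@mmul1 G) (@mmulr1 G) (@mmulDl G) (@mmulDr G).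

Section Main.
Variable G : GMR.
Local Notation R := (mat G).
Lemma maddE (x y : R) : madd x y = x + y. Proof. by []. Qed.
Lemma mmulE (x y : R) : mmul x y = x * y. Proof. by []. Qed.
Lemma moppE (x : R) : mopp x = - x. Proof. by []. Qed.
Lemma msubE (x y : R) : msub x y = x - y. Proof. by []. Qed.
Lemma mzeroE : mzero = 0 :> R. Proof. by []. Qed.
Lemma moneE : mone = 1 :> R. Proof. by []. Qed.
End Main.
Lemma keyR (R : pzRingType) (D T U V f g : R) : (forall x, D * x = x * D) ->
  U * V = 0 -> V * U = 0 -> f * V + V * f + (U * g + g * U) = 0 ->
  (f - D * U + (T * U - U * T)) * V + V * (f - D * U + (T * U - U * T)) +
  (U * (g - D * V + (T * V - V * T)) + (g - D * V + (T * V - V * T)) * U) = 0.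
Proof.
move=> hD hUV hVU hfg.
have e1 : D * U * V = 0 by rewrite -mulrA hUV mulr0.
have e2 : V * (D * U) = 0 by rewrite mulrA -hD -mulrA hVU mulr0.
have e3 : U * (D * V) = 0 by rewrite mulrA -hD -mulrA hUV mulr0.
have e4 : D * V * U = 0 by rewrite -mulrA hVU mulr0.
have t : (T * U - U * T) * V + V * (T * U - U * T) +
  (U * (T * V - V * T) + (T * V - V * T) * U) = 0.
  rewrite !mulrBl !mulrBr -!mulrA hUV hVU !mulr0 !mulrA.
  rewrite hUV hVU !mul0r ?subr0 ?sub0r ?add0r ?addr0 -!mulrA.
  by rewrite addrACA addNr subrr addr0.
have : (f * V + V * f + (U * g + g * U)) - (D * U * V + V * (D * U) + U * (D * V) + D * V * U)
   + ((T * U - U * T) * V + V * (T * U - U * T) + (U * (T * V - V * T) + (T * V - V * T) * U))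
   = 0 - (0 + 0 + 0 + 0) + 0 by rewrite hfg e1 e2 e3 e4 t.
rewrite !addr0 subr0 => <-.
rewrite ?mulrDl ?mulrDr ?mulrBl ?mulrBr ?mulNr ?mulrN ?opprD ?opprB ?opprK.
acsolve.
Qed.

Theorem lemma2p4 (G : GMR) (hG : gmr_hyp G) (phi : mat G -> mat G)
  (phi_add : forall U V, phi (madd U V) = madd (phi U) (phi V))
  (phi_zp : forall U V, mmul U V = mzero -> mmul V U = mzero ->
            madd (jord (phi U) V) (jord U (phi V)) = mzero) :
  varphi phi mP1 = mzero /\ varphi phi mP2 = mzero /\
  (forall U V, mmul U V = mzero -> mmul V U = mzero ->
     madd (jord (varphi phi U) V) (jord U (varphi phi V)) = mzero).
Proof.
move: hG => [tA [tB [fA fB]]].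
have phiD : forall x y : mat G, phi (x + y) = phi x + phi y := phi_add.
have zp : forall x y : mat G, x * y = 0 -> y * x = 0 ->
   (phi x * y + y * phi x) + (x * phi y + phi y * x) = 0 := phi_zp.
have phi0 := addf0 phiD. have phiN := addfN phiD.
have p12 : mP1 * mP2 = 0 :> mat G by apply: mat_ext; simpl; simpl0.
have p21 : mP2 * mP1 = 0 :> mat G by apply: mat_ext; simpl; simpl0.
have p1p2 : mP1 + mP2 = 1 :> mat G by apply: mat_ext; simpl; simpl0.
have H0 := zp _ _ p12 p21.
case E1: (phi mP1) H0 => [a1 m1 n1 b1]; case E2: (phi mP2) => [a2 m2 n2 b2] H0.
have h11 := f_equal (@m11 G) H0; have h12 := f_equal (@m12 G) H0.
have h21 := f_equal (@m21 G) H0; have h22 := f_equal (@m22 G) H0.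
simpl in h11, h12, h21, h22.
move: h11 h12 h21 h22; simpl0; simplA => h11 h12 h21 h22.
have a20 : a2 = 0 by apply: tA.
have b10 : b1 = 0 by apply: tB.
have m2E : m2 = - m1 by apply/eqP; rewrite -addr_eq0 addrC h12.
have n2E : n2 = - n1 by apply/eqP; rewrite -addr_eq0 addrC h21.
subst a2 b1 m2 n2; clear h11 h12 h21 h22.
have DE : phi mone = Mat a1 0 0 b2.
  by rewrite moneE -p1p2 phiD E1 E2; apply: mat_ext; simpl; rewrite ?subrr ?addr0 ?add0r.
split.
  by rewrite /varphi /Tof /comm DE E1 E2; apply: mat_ext; simpl; simpl0; simplN; simplA;
    simpl0; rewrite ?subrr ?addr0 ?add0r ?addrN ?addNr.
split.
  by rewrite /varphi /Tof /comm DE E1 E2; apply: mat_ext; simpl; simpl0; simplN; simplA;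
    simpl0; rewrite ?subrr ?addr0 ?add0r ?addrN ?addNr ?opprK.
have cM : forall m, actAM a1 m = actMB m b2.
  move=> m; pose X := Mat 0 m (0 : gN G) (0 : gB G).
  have hX1 : (mP1 + X) * (mP2 - X) = 0 by rewrite /X; mcomp.
  have hX2 : (mP2 - X) * (mP1 + X) = 0 by rewrite /X; mcomp.
  have hXX : X * X = 0 by rewrite /X; apply: mat_ext; simpl; simpl0.
  have H1 := zp _ _ hX1 hX2; have HXX := zp _ _ hXX hXX.
  rewrite phiD phiD phiN E1 E2 in H1.
  case EY: (phi X) H1 HXX => [y11 y12 y21 y22] H1 HXX.
  have k1 := f_equal (@m12 G) H1; have k2 := f_equal (@m12 G) HXX.
  simpl in k1, k2; move: k1 k2; simpl0; simplN; simplD; simplA; simpl0; simplN => k1 k2.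
  have e := f_equal2 (fun x y => x + y) k1 k2; simpl in e.
  have h : actMB m b2 - actAM a1 m + ((m1 - m1) + (y12 - y12) + (actAM y11 m - actAM y11 m) +
     (actAM y11 m - actAM y11 m) + (actMB m y22 - actMB m y22) + (actMB m y22 - actMB m y22)) = 0 + 0.
    rewrite -e; acsolve.
  move: h; rewrite !subrr !addr0 => /eqP; rewrite subr_eq0 => /eqP ->. done.
have cN : forall n, actBN b2 n = actNA n a1.
  move=> n; pose X := Mat 0 0 n (0 : gB G).
  have hX1 : (mP2 + X) * (mP1 - X) = 0 by rewrite /X; mcomp.
  have hX2 : (mP1 - X) * (mP2 + X) = 0 by rewrite /X; mcomp.
  have hXX : X * X = 0 by rewrite /X; apply: mat_ext; simpl; simpl0.
  have H1 := zp _ _ hX1 hX2; have HXX := zp _ _ hXX hXX.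
  rewrite phiD phiD phiN E1 E2 in H1.
  case EY: (phi X) H1 HXX => [y11 y12 y21 y22] H1 HXX.
  have k1 := f_equal (@m21 G) H1; have k2 := f_equal (@m21 G) HXX.
  simpl in k1, k2; move: k1 k2; simpl0; simplN; simplD; simplA; simpl0; simplN => k1 k2.
  have e := f_equal2 (fun x y => x + y) k1 k2; simpl in e.
  have h : actNA n a1 - actBN b2 n + ((n1 - n1) + (y21 - y21) + (actNA n y11 - actNA n y11) +
     (actNA n y11 - actNA n y11) + (actBN y22 n - actBN y22 n) + (actBN y22 n - actBN y22 n)) = 0 + 0.
    rewrite -e; acsolve.
  move: h; rewrite !subrr !addr0 => /eqP; rewrite subr_eq0 => /eqP ->. done.
have ca : forall a, a1 * a = a * a1.
  move=> a; apply/eqP; rewrite -subr_eq0; apply/eqP; apply: fA => m.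
  by rewrite actAM_addl actAMNl !actAM_mul cM actAMB -cM subrr.
have cb : forall b, b2 * b = b * b2.
  move=> b; apply/eqP; rewrite -subr_eq0; apply/eqP; apply: fB => m.
  by rewrite actMB_addr actMBNr !actMB_mul -cM actAMB cM subrr.
have hDc : forall x, phi mone * x = x * phi mone.
  by move=> [x11 x12 x21 x22]; rewrite DE; apply: mat_ext; simpl; simpl0; rewrite ?ca ?cM ?cN ?cb.
move=> U V hUV hVU.
exact: (@keyR _ _ (Tof phi) _ _ _ _ hDc hUV hVU (phi_zp U V hUV hVU)).
Qed.
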